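(* Let $G=(V,E)$ be a bipartite graph (parallel edges allowed) with capacities $b_v\ge0$, demands $d_{u,e},d_{v,e}\ge0$ and profits $p_e\ge0$ for each edge $e=uv$, such that $d_{v,e}\le b_v$ for all $v$ and $e\in\delta(v)$. Let $M'\subseteq E$ satisfy $\sum_{e\in\delta_{M'}(v)\setminus L(v)}d_{v,e}\le b_v$ for every $v\in V$, where $L(v)$ is a set of the two edges of $\delta_{M'}(v)$ with highest $d_{v,e}$ (or $L(v)=\delta_{M'}(v)$ if $|\delta_{M'}(v)|\le1$). Then one can find $M\subseteq M'$ with $\sum_{e\in\delta_M(v)}d_{v,e}\le b_v$ for all $v\in V$ and $p(M)\ge\frac{p(M')}{7}$.
   Context: $\delta(v)$ is the set of edges incident to $v$, $\delta_{M'}(v)=\delta(v)\cap M'$, $p(M)=\sum_{e\in M}p_e$. *)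

(* Defs.v *)
From mathcomp Require Import all_boot all_order all_algebra.
Set Implicit Arguments. Unset Strict Implicit. Unset Printing Implicit Defensive.
Import Order.TTheory GRing.Theory Num.Theory.
Local Open Scope ring_scope.

(* A multigraph on vertex type V with edge type E: edge e has endpoints
   eu e and ev e.  Parallel edges are allowed since E is an arbitrary finType. *)

Definition delta (V E : finType) (eu ev : E -> V) (v : V) : {set E} :=
  [set e | (eu e == v) || (ev e == v)].

Definition deltaM (V E : finType) (eu ev : E -> V) (M : {set E}) (v : V) : {set E} :=
  delta eu ev v :&: M.

Definition bipartite_by (V E : finType) (eu ev : E -> V) (A : {set V}) : Prop :=
  forall e : E, (eu e \in A) && (ev e \notin A).

Definition top_two (V E : finType) (R : realDomainType) (eu ev : E -> V)
    (d : V -> E -> R) (M : {set E}) (v : V) (L : {set E}) : Prop :=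
  [/\ L \subset deltaM eu ev M v,
      #|L| = minn 2 #|deltaM eu ev M v| &
      forall e f, e \in L -> f \in deltaM eu ev M v :\: L -> d v f <= d v e].

Definition profit (E : finType) (R : realDomainType) (p : E -> R) (M : {set E}) : R :=
  \sum_(e in M) p e.

(* Main.v *)
Require Import Defs.
From mathcomp Require Import all_boot all_order all_algebra zify.
Import Order.TTheory GRing.Theory Num.Theory.

Lemma sumb_card (T : finType) (A B : {set T}) :
  \sum_(f in A) ((f \in B) : nat) <= #|B|.
Proof.
have -> : \sum_(f in A) ((f \in B) : nat) = \sum_(f in A | f \in B) 1.
  by rewrite big_mkcondr; apply: eq_bigr => f _; case: (f \in B).
rewrite sum1_card; apply: subset_leq_card; apply/subsetP => x /=.
by case/andP.
Qed.

Lemma degen (T : finType) (conf : rel T) (O : T -> {set T}) (S : {set T}) :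
  (forall e f, conf e f -> (f \in O e) || (e \in O f)) ->
  (forall e, e \in S -> #|O e| <= 3) -> S != set0 ->
  exists2 e, e \in S & #|[set f in S | conf e f]| <= 6.
Proof.
move=> HO H3 S0.
case: (boolP [exists e in S, #|[set f in S | conf e f]| <= 6]).
  by move=> /exists_inP[e He H]; exists e.
rewrite negb_exists_in => /forall_inP Hall.
have le1 e : #|[set f in S | conf e f]| <=
    \sum_(f in S) (((f \in O e) : nat) + ((e \in O f) : nat)).
  rewrite -sum1_card.
  have -> : \sum_(i in [set f in S | conf e f]) 1 = \sum_(f in S | conf e f) 1.
    by apply: eq_bigl => f; rewrite inE.
  rewrite big_mkcondr; apply: leq_sum => f _.
  case: (boolP (conf e f)) => // /HO.
  by case: (f \in O e); case: (e \in O f).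
have H7 : \sum_(e in S) 7 <= \sum_(e in S) \sum_(f in S)
    (((f \in O e) : nat) + ((e \in O f) : nat)).
  apply: leq_sum => e He; apply: leq_trans (le1 e).
  by have := Hall e He; rewrite -ltnNge.
have HS : forall e, \sum_(f in S) (((f \in O e) : nat) + ((e \in O f) : nat))
   = \sum_(f in S) ((f \in O e) : nat) + \sum_(f in S) ((e \in O f) : nat).
  by move=> e; rewrite big_split.
move: H7; rewrite (eq_bigr _ (fun e _ => HS e)) big_split /=.
rewrite [X in (_ <= _ + X)%N](exchange_big) /=.
have B : \sum_(e in S) \sum_(f in S) ((f \in O e) : nat) <= \sum_(e in S) 3.
  apply: leq_sum => e He; apply: leq_trans (H3 e He); exact: sumb_card.
rewrite !sum_nat_const.
have : 0 < #|S| by rewrite card_gt0.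
rewrite sum_nat_const in B.
move=> Sp H.
have := leq_trans H (leq_add B B).
lia.
Qed.

Lemma color (T : finType) (conf : rel T) (k : nat) (S0 : {set T}) :
  (forall x, ~~ conf x x) -> symmetric conf ->
  (forall S : {set T}, S \subset S0 -> S != set0 ->
     exists2 e, e \in S & #|[set f in S | conf e f]| <= k) ->
  exists c : T -> 'I_k.+1,
    forall e f, e \in S0 -> f \in S0 -> conf e f -> c e != c f.
Proof.
move=> irr sym deg.
suff: forall n (S : {set T}), #|S| <= n -> S \subset S0 -> exists c : T -> 'I_k.+1,
    forall e f, e \in S -> f \in S -> conf e f -> c e != c f.
  by move=> /(_ #|S0| S0 (leqnn _) (subxx _)).
elim=> [|n IH] S HS HS0.
  exists (fun _ => ord0) => e f He.
  by move: HS; rewrite leqn0 => /eqP/cards0_eq HS; rewrite HS inE in He.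
case: (eqVneq S set0) => [->|Sne].
  by exists (fun _ => ord0) => e f; rewrite inE.
have [e He Hd] := deg S HS0 Sne.
have HS1 : #|S :\ e| <= n by move: HS; rewrite (cardsD1 e S) He add1n ltnS.
have HS2 : S :\ e \subset S0 by exact: subset_trans (subD1set S e) HS0.
have [c Hc] := IH (S :\ e) HS1 HS2.
set U := c @: [set f in S | conf e f].
have HU : #|U| < #|'I_k.+1|.
  rewrite card_ord ltnS; exact: leq_trans (leq_imset_card _ _) Hd.
have [i Hi] : exists i, i \notin U.
  case: (pickP [pred i | i \notin U]) => [i Hi|H]; first by exists i.
  have : [set: 'I_k.+1] \subset U.
    by apply/subsetP => x _; move: (H x) => /= /negbFE.
  move/subset_leq_card; rewrite cardsT card_ord; move: HU; rewrite card_ord; move=> A B; have := leq_trans A B; by rewrite ltnn.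
exists (fun x => if x == e then i else c x) => x y Hx Hy Hxy.
case: (eqVneq x e) => [xe|xne]; case: (eqVneq y e) => [ye|yne].
- by subst; rewrite (negbTE (irr e)) in Hxy.
- subst x; apply: contra Hi => /eqP ->; apply/imsetP; exists y => //.
  by rewrite inE Hy Hxy.
- subst y; apply: contra Hi => /eqP <-; apply/imsetP; exists x => //.
  by rewrite inE Hx sym Hxy.
- by apply: Hc => //; rewrite !inE ?xne ?yne ?Hx ?Hy.
Qed.

Local Open Scope ring_scope.

Theorem lemma6 (R : realFieldType) (V E : finType) (eu ev : E -> V)
    (A : {set V}) (b : V -> R) (d : V -> E -> R) (p : E -> R) (M' : {set E}) :
  bipartite_by eu ev A ->
  (forall v, 0 <= b v) ->
  (forall v e, e \in delta eu ev v -> 0 <= d v e) ->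
  (forall e, 0 <= p e) ->
  (forall v e, e \in delta eu ev v -> d v e <= b v) ->
  (forall v, exists L : {set E}, top_two eu ev d M' v L /\
     \sum_(e in deltaM eu ev M' v :\: L) d v e <= b v) ->
  exists M : {set E}, [/\ M \subset M',
     (forall v, \sum_(e in deltaM eu ev M v) d v e <= b v) &
     profit p M' / 7%:R <= profit p M].
Proof.
move=> Hbip Hb Hd Hp Hdb HL.
have [Lf HLf] := fin_all_exists HL.
have Lsub v : Lf v \subset deltaM eu ev M' v by case: (HLf v) => [[]].
have Lcard v : (#|Lf v| <= 2)%N.
  by case: (HLf v) => [[_ -> _] _]; apply: geq_minl.
have Lsum v : \sum_(e in deltaM eu ev M' v :\: Lf v) d v e <= b v.
  by case: (HLf v).
pose conf : rel E := fun e f => (e != f) && [exists v,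
  [&& e \in deltaM eu ev M' v, f \in deltaM eu ev M' v &
      (e \in Lf v) || (f \in Lf v)]].
pose O e := (Lf (eu e) :|: Lf (ev e)) :\ e.
have endp v e : e \in deltaM eu ev M' v -> (v = eu e) \/ (v = ev e).
  rewrite /deltaM /delta !inE => /andP[/orP[] /eqP -> _]; by [left|right].
have Ocard e : (#|O e| <= 4)%N.
  apply: leq_trans (subset_leq_card (subD1set _ e)) _.
  rewrite cardsU; apply: leq_trans (leq_subr _ _) _.
  by have := Lcard (eu e); have := Lcard (ev e); lia.
have HO e f : conf e f -> (f \in O e) || (e \in O f).
  case/andP => ef /existsP[v /and3P[He Hf /orP[Le|Lf']]].
  - apply/orP; right; rewrite /O !inE ef /=.
    by case: (endp v f Hf) => <-; rewrite Le ?orbT.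
  - apply/orP; left; rewrite /O !inE eq_sym ef /=.
    by case: (endp v e He) => <-; rewrite Lf' ?orbT.
have irr x : ~~ conf x x by rewrite /conf eqxx.
have sym : symmetric conf.
  move=> e f; rewrite /conf eq_sym; congr andb; apply: eq_existsb => v.
  by rewrite andbCA orbC.
have deg (S : {set E}) : S \subset M' -> S != set0 ->
    exists2 e, e \in S & (#|[set f in S | conf e f]| <= 6)%N.
  move=> SM Sne.
  case: (boolP [exists e in S, (e \notin Lf (eu e)) && (e \notin Lf (ev e))]).
    move=> /exists_inP[e He /andP[Nu Nv]]; exists e => //.
    apply: (@leq_trans #|O e|); last exact: leq_trans (Ocard e) _.
    apply: subset_leq_card; apply/subsetP => f; rewrite inE => /andP[_].
    case/andP => ef /existsP[v /and3P[He' Hf /orP[Le|Lf']]].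
      by case: (endp v e He') => ?; subst v; rewrite Le in Nu Nv.
    rewrite /O !inE eq_sym ef /=.
    by case: (endp v e He') => <-; rewrite Lf' ?orbT.
  rewrite negb_exists_in => /forall_inP HS.
  apply: degen HO _ Sne => e He.
  have := HS e He; rewrite negb_and !negbK => Hin.
  have : (#|Lf (eu e) :|: Lf (ev e)| <= 4)%N.
    rewrite cardsU; apply: leq_trans (leq_subr _ _) _.
    by have := Lcard (eu e); have := Lcard (ev e); lia.
  rewrite (cardsD1 e) !inE Hin /O; lia.
have [c Hc] := @color E conf 6 M' irr sym deg.
pose C (i : 'I_7) := [set e in M' | c e == i].
have sumC : \sum_(i < 7) profit p (C i) = profit p M'.
  rewrite /profit (partition_big c predT) //.
  by apply: eq_bigr => i _; apply: eq_bigl => e; rewrite inE.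
have feas i v : \sum_(e in deltaM eu ev (C i) v) d v e <= b v.
  case: (boolP [exists e in deltaM eu ev (C i) v, e \in Lf v]).
    move=> /exists_inP[e He Le].
    have -> : deltaM eu ev (C i) v = [set e].
      apply/eqP; rewrite eqEsubset sub1set He andbT.
      apply/subsetP => f Hf; rewrite inE; apply/negPn/negP => fe.
      move: He Hf; rewrite /deltaM !inE => /and3P[De Me /eqP ce]
        /and3P[Df Mf /eqP cf].
      have : conf e f.
        rewrite /conf eq_sym fe /=; apply/existsP; exists v.
        by rewrite /deltaM !inE De Me Df Mf Le.
      by move/(Hc e f Me Mf); rewrite ce cf eqxx.
    rewrite big_set1; apply: Hdb.
    by move: Le => /(subsetP (Lsub v)); rewrite /deltaM inE => /andP[].
  rewrite negb_exists_in => /forall_inP HN.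
  apply: le_trans (Lsum v).
  rewrite [X in _ <= X](big_setID (deltaM eu ev (C i) v)) /=.
  have -> : (deltaM eu ev M' v :\: Lf v) :&: deltaM eu ev (C i) v
          = deltaM eu ev (C i) v.
    apply/setIidPr/subsetP => e He; rewrite inE (negbTE (HN e He)) /=.
    by move: He; rewrite /deltaM !inE => /and3P[-> /= -> _].
  rewrite lerDl; apply: sumr_ge0 => e /setDP[/setDP[/setIP[De _] _] _].
  exact: Hd.
case: (boolP [exists i, profit p M' / 7%:R <= profit p (C i)]).
  move=> /existsP[i Hi]; exists (C i); split => //.
  by apply/subsetP => e; rewrite inE => /andP[].
rewrite negb_exists => /forallP Hall.
have : profit p M' < profit p M'.
  rewrite -{1}sumC.
  apply: (@lt_le_trans _ _ (\sum_(i < 7) (profit p M' / 7%:R))).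
    apply: ltr_sum; first by apply/hasP; exists ord0; rewrite ?mem_index_enum.
    by move=> i _; rewrite ltNge Hall.
  by rewrite sumr_const card_ord -[X in X <= _]mulr_natr divfK // pnatr_eq0.
by rewrite ltxx.
Qed.
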